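(* Let $M$ be a Maya diagram with partition $\lambda\neq\emptyset$, and let $D$ be the set of critical degrees of $M$. Then: (i) if $q_1,q_2\in D$ then $q_1+q_2\in D$; (ii) with $q_c=\lambda_1+\ell$, where $\ell$ is the length of $\lambda$, every integer $q\ge q_c$ belongs to $D$, while $q_c-1\notin D$. Moreover $D$ depends only on $\lambda$ (i.e. $M$ and $M+n$ have the same critical degrees for all $n\in\mathbb{Z}$).
   Context: A Maya diagram is a set $M\subset\mathbb{Z}$ such that $K_M^+=\{m\in M: m\ge 0\}$ and $K_M^-=\{m\in\mathbb{Z}\setminus M: m<0\}$ are finite; its index is $\sigma_M=\#K_M^+-\#K_M^-$, and $M+n=\{m+n:m\in M\}$. For a partition $\lambda$ (non-increasing non-negative integer sequence, eventually $0$; length $\ell$ = number of nonzero parts) let $M^{(\lambda)}=\{\lambda_i-i:i\ge1\}$; every Maya diagram equals $M^{(\lambda)}+\sigma_M$ for a unique partition $\lambda$, called the partition of $M$. A positive integer $q$ is a critical degree of $M$ ($M$ is a $q$-core) if $M\subset M+q$. *)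

(* Defs.v *)
From mathcomp Require Import all_boot all_order all_algebra.
Set Implicit Arguments. Unset Strict Implicit. Unset Printing Implicit Defensive.
Import Order.TTheory GRing.Theory Num.Theory.
Local Open Scope ring_scope.

Definition intset := int -> Prop.

Definition Kplus (M : intset) (m : int) : Prop := M m /\ 0 <= m.
Definition Kminus (M : intset) (m : int) : Prop := ~ M m /\ m < 0.

Definition enumerates (A : intset) (s : seq int) : Prop :=
  uniq s /\ forall m, A m <-> m \in s.

Definition finite_intset (A : intset) : Prop := exists s, enumerates A s.

Definition is_maya (M : intset) : Prop :=
  finite_intset (Kplus M) /\ finite_intset (Kminus M).

Definition maya_index (M : intset) (sigma : int) : Prop :=
  exists sp sm, enumerates (Kplus M) sp /\ enumerates (Kminus M) sm /\
    sigma = (size sp)%:Z - (size sm)%:Z.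

Definition shift (M : intset) (n : int) : intset := fun x => exists2 m, M m & x = m + n.

(* Partitions: non-increasing sequences of positive parts (trailing zeros
   omitted); lambda_i (i >= 1) is nth 0 lambda (i-1), length = size lambda. *)
Definition is_partition (lam : seq nat) : Prop :=
  sorted (fun a b => (b <= a)%N) lam /\ all (fun a => (0 < a)%N) lam.

Definition part (lam : seq nat) (i : nat) : nat := nth 0%N lam i.-1.

Definition maya_of_partition (lam : seq nat) : intset :=
  fun x => exists2 i : nat, (1 <= i)%N & x = (part lam i)%:Z - i%:Z.

Definition partition_of (M : intset) (lam : seq nat) : Prop :=
  is_partition lam /\
  exists sigma, maya_index M sigma /\
    forall x, M x <-> shift (maya_of_partition lam) sigma x.

Definition critical_degree (M : intset) (q : int) : Prop :=
  0 < q /\ forall m, M m -> shift M q m.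

(* Main.v *)
Require Import Defs.
From mathcomp Require Import all_boot all_order all_algebra.
From mathcomp Require Import zify ring.
Import Order.TTheory GRing.Theory Num.Theory.
Local Open Scope ring_scope.

Lemma crit_ext1 (A B : intset) (n : int) :
  (forall x, A x <-> B (x - n)) -> forall q, critical_degree A q -> critical_degree B q.
Proof.
move=> H q [q0 HA]; split=> // y By.
have /HA [m' Am' e] : A (y + n) by apply/H; rewrite addrK.
exists (m' - n); first by apply/H.
by rewrite -[y](addrK n) e; ring.
Qed.

Lemma crit_ext (A B : intset) (n : int) :
  (forall x, A x <-> B (x - n)) -> forall q, critical_degree A q <-> critical_degree B q.
Proof.
move=> H q; split; first exact: crit_ext1 H q.
apply: (@crit_ext1 B A (- n)) => x; rewrite opprK; split => h.
  by apply/H; rewrite addrK.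
by move/H: h; rewrite addrK.
Qed.

Lemma shiftE (A : intset) n x : shift A n x <-> A (x - n).
Proof.
split; first by case=> m Am ->; rewrite addrK.
by move=> h; exists (x - n) => //; rewrite subrK.
Qed.

Section Part.
Variable lam : seq nat.
Hypothesis Hp : is_partition lam.
Hypothesis Hne : lam != [::].

Lemma part_le1 i : (part lam i <= part lam 1)%N.
Proof.
case: Hp => Hs Ha; rewrite /part /=.
case: (ltnP i.-1 (size lam)) => hi; last by rewrite nth_default.
have tr : transitive (fun a b : nat => (b <= a)%N).
  by move=> a b c h1 h2; exact: leq_trans h2 h1.
have := @sorted_leq_nth nat (fun a b => (b <= a)%N) tr (fun a => leqnn a) 0%N lam Hs 0%N i.-1.
apply => //.
by rewrite inE; case: (lam) Hne.
Qed.

Lemma part_pos i : (1 <= i)%N -> (i <= size lam)%N -> (0 < part lam i)%N.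
Proof.
case: Hp => Hs Ha hi1 hi2; rewrite /part.
have : nth 0%N lam i.-1 \in lam by apply: mem_nth; move: hi1 hi2; case: i => [|i] /=; lia.
by move/(allP Ha).
Qed.

Lemma part_big i : (size lam < i)%N -> part lam i = 0%N.
Proof. by move=> h; rewrite /part nth_default //; lia. Qed.

Lemma N_le x : maya_of_partition lam x -> x <= (part lam 1)%:Z - 1.
Proof. case=> i hi ->; have := part_le1 i; lia. Qed.

Lemma N_low x : x <= - (size lam)%:Z - 1 -> maya_of_partition lam x.
Proof.
move=> hx; exists `|x|%N; first lia.
rewrite part_big; last lia.
lia.
Qed.

Lemma N_top : maya_of_partition lam ((part lam 1)%:Z - 1).
Proof. by exists 1%N. Qed.

Lemma N_not : ~ maya_of_partition lam (- (size lam)%:Z).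
Proof.
case=> i hi e.
case: (ltnP (size lam) i) => h.
  rewrite part_big // in e; lia.
have := @part_pos i hi h; lia.
Qed.
End Part.

Theorem mainTheorem5 (M : intset) (lam : seq nat) :
  is_maya M -> partition_of M lam -> lam != [::] ->
  (forall q1 q2, critical_degree M q1 -> critical_degree M q2 ->
                 critical_degree M (q1 + q2))
  /\ (forall q : int, ((part lam 1 + size lam)%N)%:Z <= q -> critical_degree M q)
  /\ ~ critical_degree M (((part lam 1 + size lam)%N)%:Z - 1)
  /\ (forall (n q : int), critical_degree M q <-> critical_degree (shift M n) q).
Proof.
move=> _ [Hp [sigma [_ HM]]] Hne.
have HMN : forall q, critical_degree M q <-> critical_degree (maya_of_partition lam) q.
  apply: (@crit_ext _ _ sigma) => x; rewrite HM; exact: shiftE.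
split.
  move=> q1 q2 [p1 H1] [p2 H2]; split; first exact: addr_gt0.
  move=> m /H1 [m1 /H2 [m2 Am2 e2] e1]; exists m2 => //.
  rewrite e1 e2; lia.
split.
  have hs : (0 < size lam)%N by case: (lam) Hne.
  move=> q hq; apply/HMN; split; first lia.
  move=> m /(@N_le lam Hp Hne) hm; exists (m - q); last by rewrite subrK.
  apply: (@N_low lam Hne); lia.
split.
  move/HMN => [_ H]; have [m Hm e] := H _ (N_top lam).
  have em : m = - (size lam)%:Z by lia.
  by rewrite em in Hm; exact: (@N_not lam Hp Hne Hm).
move=> n q; apply: (@crit_ext _ _ (- n)) => x.
rewrite opprK; split => h.
  by apply/shiftE; rewrite addrK.
by move/shiftE: h; rewrite addrK.
Qed.
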